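(* Let $x,y\in V(T)$ with $y\neq x$, let $\ddot s(x)$ be a worst-case scenario of $T$ with respect to $x$, and suppose $y$ is a prime broadcast center of $T$ under $\ddot s(x)$. Let $s$ be the scenario with $w^s_{a,b}=w^{\alpha_{x,y}}_{a,b}$ if $(a,b)\in P_{x,y}\cup E(T_{y,x})$ and $w^s_{a,b}=w^{\ddot s(x)}_{a,b}$ otherwise. Then $s$ is a worst-case scenario of $T$ with respect to $x$, and $y\in B^s$.
   Context: $T$ is a finite tree; each edge $(u,v)$ carries an interval $[w^-_{u,v},w^+_{u,v}]$ of non-negative reals. A scenario $s$ assigns to every edge a weight $w^s_{u,v}\in[w^-_{u,v},w^+_{u,v}]$; $C$ is the set of all scenarios. A constant $\rho>0$ is fixed. Broadcast time (postal model): for a subtree $G$ of $T$ and $u\in V(G)$, $b^s(u,G)=0$ if $u$ has no neighbour in $G$; otherwise, if $v_1,\dots,v_h$ are the neighbours of $u$ in $G$ and $G_{v}$ is the component of $G-u$ containing $v$, $b^s(u,G)=\min_{\pi}\max_{1\le k\le h}\big(k\rho+w^s_{u,v_{\pi(k)}}+b^s(v_{\pi(k)},G_{v_{\pi(k)}})\big)$ over permutations $\pi$. $B^s=\{u: b^s(u,T)\le b^s(v,T)\ \forall v\}$. For distinct $x,y$, $T_{x,y}$ is the component of $T-x$ containing $y$ and $\bar T_{x,y}$ the subtree induced by $V(T)\setminus V(T_{x,y})$. $P_{x,y}$ is the set of edges of the $x$–$y$ path. A vertex $\hat\kappa\in B^s$ is a prime broadcast center under $s$ if $b^s(\hat\kappa,\bar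 T_{\hat\kappa,u})\ge b^s(u,\bar T_{u,\hat\kappa})$ for every neighbour $u$ of $\hat\kappa$. Regret $r^s_{x,y}=b^s(x,T)-b^s(y,T)$; $\mathrm{max\_r}(x)=\max\{r^s_{x,y}:y\in V(T),s\in C\}$; $s'$ is a worst-case scenario w.r.t. $x$ if $\mathrm{max\_r}(x)=r^{s'}_{x,y'}$ for some $y'$. Base scenario: for $v\neq x$, $\alpha_{x,v}$ has $w^{\alpha_{x,v}}_{a,b}=w^+_{a,b}$ if $(a,b)\in P_{x,v}\cup E(\bar T_{v,x})$ and $w^-_{a,b}$ otherwise. *)

(* Defs.v *)
From HB Require Import structures.
From mathcomp Require Import all_boot all_order all_algebra.
From mathcomp Require Import reals.
From Stdlib Require Import ClassicalDescription.
Set Implicit Arguments. Unset Strict Implicit. Unset Printing Implicit Defensive.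
Import Order.TTheory GRing.Theory Num.Theory.
Local Open Scope ring_scope.

Section Broadcast.
Variables (R : realType) (V : finType) (e : rel V).

Definition is_tree : Prop :=
  symmetric e /\ irreflexive e /\ (forall a b, connect e a b) /\
  (forall x y (p q : seq V),
      path e x p -> last x p = y -> uniq (x :: p) ->
      path e x q -> last x q = y -> uniq (x :: q) -> p = q).

Definition on_path (x y a b : V) : Prop :=
  exists p : seq V, [/\ path e x p, last x p = y, uniq (x :: p) &
     infix [:: a; b] (x :: p) || infix [:: b; a] (x :: p)].

Definition comp (G : {set V}) (u v : V) : {set V} :=
  [set z | connect [rel a b | [&& e a b, a \in G :\ u & b \in G :\ u]] v z
           && (z \in G :\ u)].

Definition Tc (x y : V) : {set V} := comp setT x y.
Definition Tbar (x y : V) : {set V} := ~: Tc x y.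

Definition nbrs (G : {set V}) (u : V) : {set V} := [set v in G | e u v].

Definition maxlist (s : seq R) : R := foldr Num.max (head 0 s) s.
Definition minlist (s : seq R) : R := foldr Num.min (head 0 s) s.

(* broadcast time with fuel; the fuel #|G| suffices since components
   strictly shrink *)
Fixpoint bfuel (rho : R) (w : V -> V -> R) (n : nat) (u : V) (G : {set V})
    : R :=
  match n with
  | 0 => 0
  | n'.+1 =>
    let N := enum (nbrs G u) in
    if N is [::] then 0 else
    minlist [seq maxlist
               (mkseq (fun i => (i.+1)%:R * rho + w u (nth u p i)
                    + bfuel rho w n' (nth u p i) (comp G u (nth u p i)))
                  (size p))
            | p <- permutations N]
  end.

Definition btime (rho : R) (w : V -> V -> R) (u : V) (G : {set V}) : R :=
  bfuel rho w #|G| u G.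

Definition Bcenters (rho : R) (w : V -> V -> R) : {set V} :=
  [set u | [forall v, btime rho w u setT <= btime rho w v setT]].

Definition is_scenario (wlo whi w : V -> V -> R) : Prop :=
  (forall a b, w a b = w b a) /\
  (forall a b, e a b -> wlo a b <= w a b <= whi a b).

Definition regret (rho : R) (w : V -> V -> R) (x y : V) : R :=
  btime rho w x setT - btime rho w y setT.

Definition worst_case (rho : R) (wlo whi : V -> V -> R) (x : V)
    (s' : V -> V -> R) : Prop :=
  is_scenario wlo whi s' /\
  exists y', forall y s, is_scenario wlo whi s ->
    regret rho s x y <= regret rho s' x y'.

Definition prime_center (rho : R) (w : V -> V -> R) (k : V) : Prop :=
  k \in Bcenters rho w /\
  forall u, e k u -> btime rho w u (Tbar u k) <= btime rho w k (Tbar k u).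

Definition pif (P : Prop) (a b : R) : R :=
  if excluded_middle_informative P then a else b.

Definition alpha (wlo whi : V -> V -> R) (x v : V) (a b : V) : R :=
  pif (on_path x v a b \/ (a \in Tbar v x /\ b \in Tbar v x))
      (whi a b) (wlo a b).

End Broadcast.

(* Main.v *)
Require Import Defs.
From HB Require Import structures.
From mathcomp Require Import all_boot all_order all_algebra.
From mathcomp Require Import reals.
From mathcomp Require Import lra.
From Stdlib Require Import ClassicalDescription.
Set Implicit Arguments. Unset Strict Implicit. Unset Printing Implicit Defensive.
Import Order.TTheory GRing.Theory Num.Theory.
Local Open Scope ring_scope.

Section Lists.
Variable R : realType.

Lemma foldr_max_ge (d : R) s : d <= foldr Num.max d s /\ forall x, x \in s -> x <= foldr Num.max d s.
Proof.
elim: s => [|a s [IH1 IH2]] /=; first by split.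
split; first by rewrite le_max IH1 orbT.
move=> z; rewrite inE => /orP[/eqP->|/IH2 h]; first by rewrite le_max lexx.
by rewrite le_max h orbT.
Qed.

Lemma foldr_max_le (d c : R) s : d <= c -> (forall x, x \in s -> x <= c) -> foldr Num.max d s <= c.
Proof.
move=> hd; elim: s => [|a s IH] h //=.
rewrite ge_max h ?mem_head //=; apply: IH => z hz; by apply: h; rewrite inE hz orbT.
Qed.

Lemma maxlist_ge (s : seq R) x : x \in s -> x <= maxlist s.
Proof. by move=> h; have [_ ->] := foldr_max_ge (head 0 s) s. Qed.

Lemma maxlist_le (s : seq R) c : s != [::] -> (forall x, x \in s -> x <= c) -> maxlist s <= c.
Proof.
case: s => [//|a s] _ h; apply: foldr_max_le => //; apply: h; exact: mem_head.
Qed.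

Lemma foldr_min_le (d : R) s : foldr Num.min d s <= d /\ forall x, x \in s -> foldr Num.min d s <= x.
Proof.
elim: s => [|a s [IH1 IH2]] /=; first by split.
split; first by rewrite ge_min IH1 orbT.
move=> z; rewrite inE => /orP[/eqP->|/IH2 h]; first by rewrite ge_min lexx.
by rewrite ge_min h orbT.
Qed.

Lemma foldr_min_ge (d c : R) s : c <= d -> (forall x, x \in s -> c <= x) -> c <= foldr Num.min d s.
Proof.
move=> hd; elim: s => [|a s IH] h //=.
rewrite le_min h ?mem_head //=; apply: IH => z hz; by apply: h; rewrite inE hz orbT.
Qed.

Lemma minlist_le (s : seq R) x : x \in s -> minlist s <= x.
Proof. by move=> h; have [_ ->] := foldr_min_le (head 0 s) s. Qed.

Lemma minlist_ge (s : seq R) c : s != [::] -> (forall x, x \in s -> c <= x) -> c <= minlist s.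
Proof.
case: s => [//|a s] _ h; apply: foldr_min_ge => //; apply: h; exact: mem_head.
Qed.

Lemma foldr_min_mem (d : R) s : foldr Num.min d s \in d :: s.
Proof.
elim: s => [|a s IH] /=; first by rewrite mem_head.
rewrite /Num.min; case: ifP => _; first by rewrite !inE eqxx orbT.
move: IH; rewrite !inE => /orP[->//|->]; by rewrite !orbT.
Qed.

Lemma minlist_mem (s : seq R) : s != [::] -> minlist s \in s.
Proof.
case: s => [//|a s] _; have := foldr_min_mem a (a :: s).
by rewrite /minlist /= inE => /orP[/eqP->|//]; rewrite mem_head.
Qed.

Lemma minlist_map_mem (T : eqType) (f : T -> R) (s : seq T) :
  s != [::] -> exists2 t, t \in s & minlist (map f s) = f t.
Proof.
move=> hs; have : minlist (map f s) \in map f s by apply: minlist_mem; case: s hs.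
by case/mapP=> t ht ->; exists t.
Qed.

End Lists.

Lemma index_filter_le (T : eqType) (P : pred T) (a : T) s :
  P a -> (index a (filter P s) <= index a s)%N.
Proof.
move=> Pa; elim: s => [|b s IH] //=.
case: ifP => Pb /=; rewrite /index /=; case: ifP => // ba; rewrite -/(index a _).
- by move/eqP: ba Pb => ->; rewrite Pa.
- exact: leqW.
Qed.

Section FgSec.
Variables (R : realType) (V : eqType) (rho : R) (d : V).
Hypothesis rho0 : 0 <= rho.

Definition rv (f : V -> R) (p : seq V) : R :=
  maxlist (mkseq (fun i => (i.+1)%:R * rho + f (nth d p i)) (size p)).

Definition Fg (f : V -> R) (N : seq V) : R :=
  minlist [seq rv f p | p <- permutations N].

Lemma mem_mkseqP (g : nat -> R) n x : x \in mkseq g n -> exists2 i, (i < n)%N & x = g i.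
Proof. by case/mapP => i; rewrite mem_iota add0n => /andP[_ h] ->; exists i. Qed.

Lemma mem_mkseqI (g : nat -> R) n i : (i < n)%N -> g i \in mkseq g n.
Proof. by move=> h; apply: map_f; rewrite mem_iota add0n h. Qed.

Lemma rv_ge f p v : v \in p -> rho + f v <= rv f p.
Proof.
move=> hv; have hi : (index v p < size p)%N by rewrite index_mem.
apply: (le_trans _ (maxlist_ge (mem_mkseqI (fun i => (i.+1)%:R * rho + f (nth d p i)) hi))).
rewrite (nth_index d hv) lerD2r ler_peMl // ler1n //.
Qed.

Lemma rv_le f p c : (forall i, (i < size p)%N -> (i.+1)%:R * rho + f (nth d p i) <= c) ->
  p != [::] -> rv f p <= c.
Proof.
move=> h hp; apply: maxlist_le; first by rewrite -size_eq0 size_mkseq size_eq0.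
by move=> x /mem_mkseqP [i hi ->]; apply: h.
Qed.

Lemma perms_ne (N : seq V) : permutations N != [::].
Proof. by apply/eqP => h; have := mem_permutations N N; rewrite h perm_refl. Qed.

Lemma Fg_ge f N v : v \in N -> rho + f v <= Fg f N.
Proof.
move=> hv; apply: minlist_ge; first by rewrite -size_eq0 size_map size_eq0 perms_ne.
move=> x /mapP [p]; rewrite mem_permutations => hp ->.
by apply: rv_ge; rewrite (perm_mem hp).
Qed.

Lemma Fg_attained f N : exists2 p, perm_eq p N & Fg f N = rv f p.
Proof.
rewrite /Fg; have [p hp ->] := minlist_map_mem (rv f) (perms_ne N).
by exists p => //; rewrite -mem_permutations.
Qed.

Lemma Fg_le_rv f N p : perm_eq p N -> Fg f N <= rv f p.
Proof. by move=> hp; apply: minlist_le; apply: map_f; rewrite mem_permutations. Qed.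

Lemma rv_ge0 f p : (forall v, v \in p -> 0 <= f v) -> 0 <= rv f p.
Proof.
case: p => [|a p] h; first by rewrite /rv /= lexx.
apply: (le_trans _ (rv_ge _ (mem_head a p))); apply: addr_ge0 => //; apply: h; exact: mem_head.
Qed.

Lemma Fg_lip f f' N (del : R) : 0 <= del -> (forall v, v \in N -> f' v <= f v + del) ->
  Fg f' N <= Fg f N + del.
Proof.
move=> hdel h; have [p hp ->] := Fg_attained f N.
apply: le_trans (Fg_le_rv f' hp) _.
case: p hp => [|a p] hp; first by rewrite /rv /= add0r.
apply: rv_le => // i hi.
apply: (le_trans (y := (i.+1)%:R * rho + f (nth d (a :: p) i) + del)).
  rewrite -addrA lerD2l; apply: h; rewrite -(perm_mem hp); exact: mem_nth.
rewrite lerD2r; apply: maxlist_ge.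
exact: (mem_mkseqI (fun i => (i.+1)%:R * rho + f (nth d (a :: p) i)) hi).
Qed.

Lemma Fg_up f N v : v \in N -> Fg f N <= Num.max (rho + f v) (rho + Fg f (rem v N)).
Proof.
move=> hv; have [p hp ->] := Fg_attained f (rem v N).
have hq : perm_eq (v :: p) N.
  by rewrite perm_sym; apply: perm_trans (perm_to_rem hv) _; rewrite perm_cons perm_sym.
apply: le_trans (Fg_le_rv f hq) _; apply: rv_le => // [[|j]] hj /=.
  by rewrite mul1r le_max lexx.
rewrite le_max; apply/orP; right.
rewrite -natr1 mulrDl mul1r [_ + rho]addrC -addrA lerD2l.
by apply: maxlist_ge; apply: (mem_mkseqI (fun i => (i.+1)%:R * rho + f (nth d p i))).
Qed.

Lemma Fg_sub f N N' : uniq N' -> uniq N -> {subset N' <= N} ->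
  (forall v, v \in N -> 0 <= f v) -> Fg f N' <= Fg f N.
Proof.
move=> uN' uN sub hf; apply: minlist_ge; first by rewrite -size_eq0 size_map size_eq0 perms_ne.
move=> x /mapP [p]; rewrite mem_permutations => hp ->.
have up : uniq p by rewrite (perm_uniq hp).
set q := filter (mem N') p.
have uq : uniq q by apply: filter_uniq.
have hq : perm_eq q N'.
  apply: uniq_perm => // z; rewrite mem_filter /= (perm_mem hp).
  by case hz: (z \in N') => //=; rewrite (sub _ hz).
apply: le_trans (Fg_le_rv f hq) _.
have hfp : forall v, v \in p -> 0 <= f v by move=> v; rewrite (perm_mem hp); apply: hf.
case hq0: (q == [::]); first by rewrite (eqP hq0) /rv /=; apply: rv_ge0.
apply: rv_le; last by rewrite hq0.
move=> i hi; set a := nth d q i.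
have aq : a \in q by apply: mem_nth.
have ap : a \in p by move: aq; rewrite mem_filter => /andP[].
have hia : (index a p < size p)%N by rewrite index_mem.
apply: (le_trans _ (maxlist_ge (mem_mkseqI (fun i => (i.+1)%:R * rho + f (nth d p i)) hia))).
rewrite (nth_index d ap) lerD2r ler_wpM2r // ler_nat ltnS.
have -> : i = index a q by rewrite index_uniq.
apply: index_filter_le; move: aq; rewrite mem_filter => /andP[] //.
Qed.

End FgSec.

Section Bf.
Variables (R : realType) (V : finType) (e : rel V) (rho : R).
Hypothesis irr : irreflexive e.
Hypothesis rho0 : 0 <= rho.

Lemma Fg_eq_in (d : V) f f' N : {in N, f =1 f'} -> Fg rho d f N = Fg rho d f' N.
Proof.
move=> h; apply/le_anti/andP; split; rewrite -[X in _ <= X]addr0; apply: Fg_lip => // v hv;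
  by rewrite addr0 h.
Qed.

Lemma bfuel_S w n u G : bfuel e rho w n.+1 u G =
  Fg rho u (fun v => w u v + bfuel e rho w n v (Defs.comp e G u v)) (enum (nbrs e G u)).
Proof.
cbn [bfuel]; rewrite /Fg; case: (enum (nbrs e G u)) => [|a N] /=; first by rewrite /rv /minlist /= minxx.
congr (minlist _); apply: eq_map => p; rewrite /rv; congr (maxlist _); apply: eq_mkseq => i; by rewrite addrA.
Qed.

Lemma in_nbrs (G : {set V}) u v : (v \in nbrs e G u) = (v \in G) && e u v.
Proof. by rewrite inE. Qed.

Lemma in_comp (G : {set V}) u v z : (z \in Defs.comp e G u v) =
  connect [rel a b | [&& e a b, a \in G :\ u & b \in G :\ u]] v z && (z \in G :\ u).
Proof. by rewrite inE. Qed.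

Lemma comp_sub (G : {set V}) u v : Defs.comp e G u v \subset G :\ u.
Proof. by apply/subsetP => z; rewrite in_comp => /andP[]. Qed.

Lemma self_comp (G : {set V}) u v : v \in nbrs e G u -> v \in Defs.comp e G u v.
Proof.
rewrite in_nbrs in_comp => /andP[vG euv]; rewrite connect0 /= !inE vG andbT.
by apply/eqP => vu; rewrite vu irr in euv.
Qed.

Lemma card_comp (G : {set V}) u v : u \in G -> (#|Defs.comp e G u v| < #|G|)%N.
Proof.
move=> uG; apply: (leq_ltn_trans (subset_leq_card (comp_sub G u v))).
by rewrite [X in (_ < X)%N](cardsD1 u) uG.
Qed.

Lemma bfuel_fuel w n m u (G : {set V}) : u \in G -> (#|G| <= n)%N -> (#|G| <= m)%N ->
  bfuel e rho w n u G = bfuel e rho w m u G.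
Proof.
elim: n m u G => [|n IH] m u G uG; have h0 : (0 < #|G|)%N by (apply/card_gt0P; exists u).
  by rewrite leqn0 => /eqP h; rewrite h in h0.
case: m => [|m] hn hm; first by rewrite leqn0 in hm; rewrite (eqP hm) in h0.
rewrite !bfuel_S; apply: Fg_eq_in => v; rewrite mem_enum => hv; congr (_ + _).
have hc := card_comp v uG.
by apply: IH; [apply: self_comp| rewrite -ltnS; apply: leq_trans hc _ | rewrite -ltnS; apply: leq_trans hc _].
Qed.

Lemma btime_unfold w u (G : {set V}) : u \in G ->
  btime e rho w u G = Fg rho u (fun v => w u v + btime e rho w v (Defs.comp e G u v)) (enum (nbrs e G u)).
Proof.
move=> uG; rewrite /btime.
have : (0 < #|G|)%N by apply/card_gt0P; exists u.
case hG: #|G| => [//|k] _; rewrite bfuel_S; apply: Fg_eq_in => v; rewrite mem_enum => hv.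
congr (_ + _); apply: bfuel_fuel => //; first exact: self_comp.
by rewrite -ltnS -hG; apply: card_comp.
Qed.

Lemma bfuel_mono w w' n u (G : {set V}) : u \in G ->
  (forall a b, a \in G -> b \in G -> e a b -> w a b <= w' a b) ->
  bfuel e rho w n u G <= bfuel e rho w' n u G.
Proof.
elim: n u G => [|n IH] u G uG h; first by [].
rewrite !bfuel_S -[X in _ <= X]addr0; apply: Fg_lip => // v; rewrite mem_enum => hv.
rewrite addr0; apply: lerD.
  by apply: h => //; move: hv; rewrite in_nbrs => /andP[].
apply: IH; first exact: self_comp.
move=> a b aC bC; apply: h; [move: aC | move: bC];
  by move/(subsetP (comp_sub G u v)); rewrite !inE => /andP[].
Qed.

Lemma bfuel_lip w w' n u (G : {set V}) a b del : u \in G -> 0 <= del ->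
  (forall c d, c \in G -> d \in G -> e c d ->
     w' c d <= w c d + (if ((c == a) && (d == b)) || ((c == b) && (d == a)) then del else 0)) ->
  bfuel e rho w' n u G <= bfuel e rho w n u G + del.
Proof.
elim: n u G => [|n IH] u G uG hdel h; first by rewrite add0r.
rewrite !bfuel_S; apply: Fg_lip => // v; rewrite mem_enum => hv.
have vG : v \in G by move: hv; rewrite in_nbrs => /andP[].
have euv : e u v by move: hv; rewrite in_nbrs => /andP[].
have hw := h u v uG vG euv.
have subC : forall z, z \in Defs.comp e G u v -> (z \in G) && (z != u).
  by move=> z /(subsetP (comp_sub G u v)); rewrite !inE andbC.
case: ifP hw => hab hw.
  rewrite addrAC; apply: lerD => //.
  apply: bfuel_mono; first exact: self_comp.
  move=> c d /subC /andP[cG cu] /subC /andP[dG du] ecd.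
  have := h c d cG dG ecd; case: ifP => [|_]; last by rewrite addr0.
  move: hab => /orP[] /andP[/eqP ua /eqP vb] /orP[] /andP[/eqP ca /eqP db];
    by move: cu du; rewrite ?ua ?ca ?db ?eqxx.
rewrite addr0 in hw; rewrite -addrA; apply: lerD => //.
apply: IH => //; first exact: self_comp.
move=> c d /subC /andP[cG _] /subC /andP[dG _]; exact: h.
Qed.

End Bf.

Section Tree.
Variables (V : finType) (e : rel V).
Hypothesis tree : is_tree e.

Lemma t_sym : symmetric e. Proof. by case: tree. Qed.
Lemma t_irr : irreflexive e. Proof. by case: tree => _ []. Qed.
Lemma t_conn a b : connect e a b. Proof. by case: tree => _ [] _ []. Qed.
Lemma t_uniq x z p q : path e x p -> last x p = z -> uniq (x :: p) ->
  path e x q -> last x q = z -> uniq (x :: q) -> p = q.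
Proof. by case: tree => _ [] _ [] _ h; apply: h. Qed.

Definition rr (P : pred V) : rel V := [rel a b | [&& e a b, P a & P b]].
Lemma rrE (P : pred V) a b : rr P a b = [&& e a b, P a & P b]. Proof. by []. Qed.

Lemma rr_path (P : pred V) x q : path (rr P) x q -> path e x q.
Proof. by apply: sub_path => a b /and3P[]. Qed.

Lemma rr_all (P : pred V) x q : path (rr P) x q -> all P q.
Proof. by elim: q x => [|a q IH] x //= /andP[/and3P[_ _ ->] /IH]. Qed.

Lemma rr_head (P : pred V) x a q : path (rr P) x (a :: q) -> P x.
Proof. by case/andP => /and3P[]. Qed.

Lemma path_rr (P : pred V) x q : path e x q -> P x -> all P q -> path (rr P) x q.
Proof.
elim: q x => [|a q IH] x //= /andP[exa pq] Px /andP[Pa aq].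
rewrite /= rrE exa Px Pa /=; exact: IH.
Qed.

Lemma rr_conn_mem (P : pred V) x q : path (rr P) x q -> forall v, v \in x :: q -> connect (rr P) x v.
Proof. by move=> h v hv; apply: path_connect h v hv. Qed.

Lemma cpath (r : rel V) x t : connect r x t -> exists p, [/\ path r x p, last x p = t & uniq (x :: p)].
Proof.
case/connectP => p hp ->; case: (shortenP hp) => p' hp' up' _; by exists p'.
Qed.

Lemma inD a b t : (t \in Tc e a b) = connect (rr (fun v => v != a)) b t && (t != a).
Proof.
rewrite /Tc /Defs.comp inE !inE andbT; congr (_ && _); apply: eq_connect => c d.
by rewrite /= !inE !andbT.
Qed.

Lemma TF1a pr z c : e pr z -> e z c -> c != pr -> c \in Tc e pr z.
Proof.
move=> epz ezc cp; rewrite inD cp andbT; apply: connect1; rewrite /= rrE ezc cp andbT.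
by apply/eqP => zp; rewrite zp t_irr in epz.
Qed.

Lemma zD pr z : e pr z -> z \in Tc e pr z.
Proof. by move=> epz; rewrite inD connect0 /=; apply/eqP => zp; rewrite zp t_irr in epz. Qed.

Lemma prD pr z : pr \notin Tc e pr z.
Proof. by rewrite inD eqxx andbF. Qed.

Lemma TF1b pr z c : e pr z -> e z c -> c != pr -> Defs.comp e (Tc e pr z) z c = Tc e z c.
Proof.
move=> epz ezc cp; apply/setP => t; rewrite [RHS]inD [LHS]inE.
apply/idP/idP.
  case/andP => hc ht; rewrite !inE in ht; case/andP: ht => tz _; rewrite tz andbT.
  move: hc; apply: connect_sub => a b /and3P[eab]; rewrite !inE => /andP[az _] /andP[bz _].
  by apply: connect1; rewrite /= rrE eab az bz.
case/andP => /cpath [q [hq lq uq]] tz.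
have pq := rr_path hq.
have nz : forall v, v \in c :: q -> v != z.
  move=> v; rewrite inE => /orP[/eqP->|vq]; last by have := allP (rr_all hq) v vq.
  by apply/eqP => cz; rewrite cz t_irr in ezc.
have npr : forall v, v \in c :: q -> v != pr.
  move=> v hv; apply/eqP => vp; rewrite vp in hv.
  case/splitPl: hv pq nz {uq lq hq} => q1 q2 lq1; rewrite cat_path => /andP[pq1 _] nz.
  move: lq1; case: (shortenP pq1) => q1' pq1' uq1' sub1 lq1'.
  have : c :: q1' = [:: pr].
    apply: (@t_uniq z pr) => //=.
    - by rewrite ezc.
    - move: uq1' => /= /andP[h1 h2]; rewrite h1 h2 !andbT inE negb_or; apply/andP; split.
        by rewrite eq_sym; apply: nz; rewrite mem_head.
      apply/negP => zq; have := sub1 z zq => zq1.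
      by have := nz z; rewrite inE mem_cat zq1 orbT eqxx => /(_ isT).
    - by rewrite andbT t_sym epz.
    - rewrite andbT inE; apply/eqP => zp; by rewrite zp t_irr in epz.
  by case=> cpr; rewrite cpr eqxx in cp.
have inDv : forall v, v \in c :: q -> v \in Tc e pr z.
  move=> v hv; rewrite inD npr // andbT.
  apply: (@connect_trans _ _ c).
    apply: connect1; rewrite /= rrE ezc (npr c (mem_head c q)) andbT.
    by apply/eqP => zp; rewrite zp t_irr in epz.
  have hp : path (rr (fun v => v != pr)) c q.
    apply: (path_rr (P := fun v => v != pr) pq (npr c (mem_head c q))).
    by apply/allP => u hu; apply: npr; rewrite inE hu orbT.
  exact: (rr_conn_mem hp hv).
have tD : t \in Tc e pr z by rewrite -lq; apply: inDv; exact: mem_last.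
rewrite in_setD1 tz tD andbT.
rewrite andbT; apply/connectP; exists q => //; apply: (@path_rr (fun v => v \in Tc e pr z :\ z)) => //.
  by rewrite in_setD1 (nz c (mem_head c q)) (inDv c (mem_head c q)).
by apply/allP => u hu; rewrite in_setD1 nz ?inDv // inE hu orbT.
Qed.

Lemma TF3 a b : e a b -> ~: Tc e a b = Tc e b a.
Proof.
move=> eab; have ab : a != b by apply/eqP => h; rewrite h t_irr in eab.
apply/setP => t; rewrite inE; apply/idP/idP.
  move=> tn; case: (cpath (t_conn a t)) => q [pq lq uq].
  case hb: (b \in q).
    case/splitPr: hb pq lq uq => q1 q2 pq lq uq.
    move: pq; rewrite cat_path => /andP[_ /= /andP[_ pq2]].
    move: lq; rewrite last_cat /= => lq.
    move: uq; rewrite -cat_cons cat_uniq => /and3P[u1 dj u2].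
    exfalso; move/negP: tn; apply; rewrite inD -lq; apply/andP; split.
      apply/connectP; exists q2 => //; apply: path_rr => //; first by rewrite eq_sym.
      apply/allP => v vq2; apply/eqP => va; move/hasPn: dj => /(_ v).
      by rewrite inE vq2 orbT => /(_ isT); rewrite inE va eqxx.
    apply/eqP => la; move/hasPn: dj => /(_ a).
    by rewrite -la mem_last => /(_ isT); rewrite inE eqxx.
  rewrite inD -lq; apply/andP; split.
    apply/connectP; exists q => //; apply: path_rr => //; apply/allP => v vq.
    by apply/eqP => vb; rewrite -vb vq in hb.
  have := mem_last a q; rewrite inE => /orP[/eqP->|lm]; first by [].
  by apply/eqP => lb; rewrite lb hb in lm.
move=> tba; apply/negP => tab.
move: tab tba; rewrite !inD => /andP[/cpath [q1 [p1 l1 u1]] ta] /andP[/cpath [q2 [p2 l2 u2]] tb].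
have eq12 : b :: q1 = q2.
  apply: (@t_uniq a t) => //=.
  - by rewrite eab (rr_path p1).
  - move: u1 => /= /andP[h1 h2]; rewrite h1 h2 !andbT inE negb_or ab /=; apply/negP => aq1.
    by have := allP (rr_all p1) a aq1; rewrite eqxx.
  - exact: (rr_path p2).
have := rr_all p2; rewrite -eq12 /= eqxx //.
Qed.

End Tree.

Section Chain.
Variables (R : realType) (V : finType) (e : rel V) (rho : R).
Hypothesis tree : is_tree e.
Hypothesis rho0 : 0 < rho.

Let irr := t_irr tree.
Let rho0' : 0 <= rho. Proof. exact: ltW. Qed.

Definition good (G : {set V}) z :=
  z \in G /\ forall c, c \in nbrs e G z -> Defs.comp e G z c = Tc e z c.

Lemma good_setT z : good setT z.
Proof. by split; rewrite ?inE. Qed.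

Lemma nbrs_D pr z c : e pr z -> (c \in nbrs e (Tc e pr z) z) = e z c && (c != pr).
Proof.
move=> epz; rewrite in_nbrs; apply/andP/andP => [[cD ->]|[ezc cp]]; split => //.
  by apply/eqP => cpr; rewrite cpr (negbTE (prD e pr z)) in cD.
exact: TF1a.
Qed.

Lemma good_D pr z : e pr z -> good (Tc e pr z) z.
Proof.
move=> epz; split; first exact: zD.
by move=> c; rewrite nbrs_D // => /andP[ezc cp]; apply: TF1b.
Qed.

Definition fw (w : V -> V -> R) z := fun v => w z v + btime e rho w v (Tc e z v).

Lemma bt_unf w G z : good G z ->
  btime e rho w z G = Fg rho z (fw w z) (enum (nbrs e G z)).
Proof.
case=> zG hc; rewrite btime_unfold //; apply: Fg_eq_in => // v; rewrite mem_enum => hv.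
by rewrite /fw hc.
Qed.

Lemma step_lo w G z c : good G z -> c \in nbrs e G z ->
  rho + w z c + btime e rho w c (Tc e z c) <= btime e rho w z G.
Proof.
move=> hg hc; rewrite (bt_unf w hg) -addrA; apply: (Fg_ge z rho0' (fw w z)).
by rewrite mem_enum.
Qed.

Lemma step_up w G z c : good G z -> c \in nbrs e G z ->
  btime e rho w z G <= Num.max (rho + (w z c + btime e rho w c (Tc e z c)))
                              (rho + Fg rho z (fw w z) (rem c (enum (nbrs e G z)))).
Proof.
move=> hg hc; rewrite bt_unf //; apply: Fg_up; by rewrite mem_enum.
Qed.

Lemma Fg_ge0 (d : V) f N : (forall v, v \in N -> 0 <= f v) -> 0 <= Fg rho d f N.
Proof.
move=> h; apply: minlist_ge; first by rewrite -size_eq0 size_map size_eq0 perms_ne.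
move=> x /mapP [p]; rewrite mem_permutations => hp ->.
apply: rv_ge0 => // v; rewrite (perm_mem hp); exact: h.
Qed.

Lemma bfuel_ge0 w n u G : (forall a b, e a b -> 0 <= w a b) -> 0 <= bfuel e rho w n u G.
Proof.
move=> hw; elim: n u G => [|n IH] u G; first by [].
rewrite bfuel_S; apply: Fg_ge0 => v; rewrite mem_enum in_nbrs => /andP[_ euv].
by apply: addr_ge0; [apply: hw | apply: IH].
Qed.

Lemma bt_ge0 w u G : (forall a b, e a b -> 0 <= w a b) -> 0 <= btime e rho w u G.
Proof. exact: bfuel_ge0. Qed.

Lemma off_bound w G z c : (forall a b, e a b -> 0 <= w a b) -> good G z -> c \in nbrs e G z ->
  Fg rho z (fw w z) (rem c (enum (nbrs e G z))) <= btime e rho w z (Tc e c z).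
Proof.
move=> hw hg hc; have ezc : e z c by move: hc; rewrite in_nbrs => /andP[].
have ecz : e c z by rewrite t_sym.
rewrite (bt_unf _ (good_D ecz)); apply: Fg_sub => //.
- by apply: rem_uniq; apply: enum_uniq.
- exact: enum_uniq.
- move=> v; rewrite mem_rem_uniq ?enum_uniq // => /andP[/= vc]; rewrite !mem_enum.
  by rewrite in_nbrs nbrs_D // vc andbT => /andP[].
- move=> v; rewrite mem_enum nbrs_D // => /andP[ezv _].
  by apply: addr_ge0; [apply: hw | apply: bt_ge0].
Qed.

Definition pcost (w : V -> V -> R) (s : seq V) : R :=
  \sum_(ab <- zip s (behead s)) (rho + w ab.1 ab.2).

Lemma pcost_cons2 w z v q : pcost w [:: z, v & q] = rho + w z v + pcost w (v :: q).
Proof. by rewrite /pcost /= big_cons. Qed.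

Lemma pcost1 w z : pcost w [:: z] = 0.
Proof. by rewrite /pcost /= big_nil. Qed.

Lemma pcost_ge0 w z q : (forall a b, e a b -> 0 <= w a b) -> path e z q -> 0 <= pcost w (z :: q).
Proof.
move=> hw; elim: q z => [|v q IH] z; first by rewrite pcost1.
move=> /= /andP[ezv pq]; rewrite pcost_cons2; apply: addr_ge0; last exact: IH.
by apply: addr_ge0 => //; apply: hw.
Qed.

Lemma LC w q' : forall z v G, good G z -> v \in G -> path e z (v :: q') -> uniq [:: z, v & q'] ->
  pcost w [:: z, v & q'] + btime e rho w (last v q') (Tc e (last z (belast v q')) (last v q'))
    <= btime e rho w z G.
Proof.
elim: q' => [|v' q IH] z v G hg vG /= /andP[ezv pq] uq.
  by rewrite pcost_cons2 pcost1 addr0; apply: step_lo => //; rewrite in_nbrs vG.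
rewrite pcost_cons2 -addrA.
apply: le_trans (step_lo w hg (_ : v \in nbrs e G z)); last by rewrite in_nbrs vG.
rewrite lerD2l.
move: pq => /= /andP[evv' pq].
have v'z : v' != z.
  by apply/eqP => h; move: uq; rewrite h /= !inE eqxx !orbT.
have := IH v v' (Tc e z v) (good_D ezv) (TF1a tree ezv evv' v'z) (_ : path e v (v' :: q)).
rewrite /= evv' pq => /(_ isT); move: uq => /= /andP[_ uq] /(_ uq).
by [].
Qed.

Lemma UC w q' : (forall a b, e a b -> 0 <= w a b) ->
  forall z v G, good G z -> v \in G -> path e z (v :: q') -> uniq [:: z, v & q'] ->
  btime e rho w (last z (belast v q')) (Tc e (last v q') (last z (belast v q')))
    <= btime e rho w (last v q') (Tc e (last z (belast v q')) (last v q')) ->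
  btime e rho w z (Tc e v z) <= btime e rho w (last z (belast v q')) (Tc e (last v q') (last z (belast v q')))
  /\ btime e rho w z G <= pcost w [:: z, v & q'] + btime e rho w (last v q') (Tc e (last z (belast v q')) (last v q')).
Proof.
move=> hw; elim: q' => [|v' q IH] z v G hg vG /= /andP[ezv pq] uq.
  move=> hab; split => //.
  have hc : v \in nbrs e G z by rewrite in_nbrs vG.
  apply: le_trans (step_up w hg hc) _; rewrite pcost_cons2 pcost1 addr0 ge_max.
  rewrite addrA lexx /= -addrA lerD2l; apply: le_trans (off_bound hw hg hc) _.
  apply: le_trans hab _; rewrite lerDr; exact: hw.
set y := last v' q; set u0 := last v (belast v' q).
move=> hab.
move: pq => /= /andP[evv' pq].
have v'z : v' != z.
  by apply/eqP => h; move: uq; rewrite h /= !inE eqxx !orbT.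
have := IH v v' (Tc e z v) (good_D ezv) (TF1a tree ezv evv' v'z) (_ : path e v (v' :: q)).
rewrite /= evv' pq => /(_ isT); move: (uq) => /= /andP[_ uq'] /(_ uq' hab) [IH1 IH2].
have evz : e v z by rewrite t_sym.
have ev'v : e v' v by rewrite t_sym.
have hzn : z \in nbrs e (Tc e v' v) v by rewrite nbrs_D // evz eq_sym.
have H1 : btime e rho w z (Tc e v z) <= btime e rho w u0 (Tc e y u0).
  apply: le_trans IH1; apply: le_trans (step_lo w (good_D ev'v) hzn).
  by rewrite lerDr; apply: addr_ge0 => //; apply: hw.
split => //.
have hc : v \in nbrs e G z by rewrite in_nbrs vG.
have pc0 : 0 <= pcost w [:: v, v' & q] by apply: pcost_ge0 => //=; rewrite evv'.
apply: le_trans (step_up w hg hc) _; rewrite pcost_cons2 ge_max; apply/andP; split.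
  by rewrite -!addrA !lerD2l.
rewrite -!addrA lerD2l; apply: le_trans (off_bound hw hg hc) _.
apply: le_trans H1 _; apply: le_trans hab _.
rewrite addrA lerDr; apply: addr_ge0 => //; exact: hw.
Qed.

End Chain.

Lemma zip_infix (T : eqType) (a b : T) s : ((a, b) \in zip s (behead s)) = infix [:: a; b] s.
Proof.
elim: s => [|c s IH] //=; case: s IH => [|d s] IH //=.
  by rewrite orbF; case: (a == c).
rewrite inE IH xpair_eqE /=; congr (_ || _).
by rewrite prefix0s andbT.
Qed.

Section Tree2.
Variables (V : finType) (e : rel V).
Hypothesis tree : is_tree e.

Lemma last_edge z v q : path e z (v :: q) -> e (last z (belast v q)) (last v q).
Proof.
by rewrite (lastI v q) rcons_path => /andP[_].
Qed.

Lemma prefA x q c : path e x q -> uniq (x :: q) -> c \in x :: q -> c != last x q ->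
  c \in Tc e (last x q) x.
Proof.
move=> pq uq hc cy; case/splitPl: hc pq uq cy => q1 q2 lq1.
rewrite cat_path -cat_cons cat_uniq last_cat lq1 => /andP[pq1 _] /and3P[_ dj _] cy.
have hy : forall z, z \in x :: q1 -> z != last c q2.
  move=> z hz; apply/eqP => zy; have := mem_last c q2; rewrite inE => /orP[/eqP yc | yq2].
    by rewrite yc eqxx in cy.
  by move/hasPn: dj => /(_ _ yq2); rewrite -zy hz.
rewrite inD // cy andbT; apply/connectP; exists q1 => //.
apply: path_rr => //; first by apply: hy; rewrite mem_head.
by apply/allP => u hu; apply: hy; rewrite inE hu orbT.
Qed.

Lemma Tc_same a b c : c \in Tc e a b -> Tc e a c = Tc e a b.
Proof.
rewrite inD // => /andP[hbc _]; apply/setP => t; rewrite !inD //; congr (_ && _).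
have hs : connect_sym (rr e (fun v => v != a)).
  apply: sym_connect_sym => u w; by rewrite /= !rrE (t_sym tree u w); case: (e w u) => //=; rewrite andbC.
apply/idP/idP => h; first exact: connect_trans hbc h.
by apply: connect_trans _ h; rewrite hs.
Qed.

End Tree2.

Lemma pifT (R : realType) (P : Prop) (a b : R) : P -> pif P a b = a.
Proof. by rewrite /pif; case: excluded_middle_informative. Qed.

Lemma pifF (R : realType) (P : Prop) (a b : R) : ~ P -> pif P a b = b.
Proof. by rewrite /pif; case: excluded_middle_informative. Qed.

Lemma pif_cases (R : realType) (P : Prop) (a b : R) (Q : R -> Prop) : Q a -> Q b -> Q (pif P a b).
Proof. by rewrite /pif; case: excluded_middle_informative. Qed.

Lemma pif_ext (R : realType) (P Q : Prop) (a b : R) : (P <-> Q) -> pif P a b = pif Q a b.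
Proof.
move=> h; rewrite /pif; case: excluded_middle_informative => hp;
  case: excluded_middle_informative => hq //; [by case: hq; apply h | by case: hp; apply h].
Qed.

Lemma on_path_sym (V : finType) (e : rel V) x y a b : on_path e x y a b <-> on_path e x y b a.
Proof. by split; case=> q [h1 h2 h3 h4]; exists q; split => //; rewrite orbC. Qed.

Lemma path_zip_edge (V : finType) (e : rel V) x s a b : path e x s -> (a, b) \in zip (x :: s) s -> e a b.
Proof.
elim: s x => [|c s IH] x //= /andP[exc ps]; rewrite inE xpair_eqE => /orP[/andP[/eqP-> /eqP->]//|].
exact: IH.
Qed.

Section Chain2.
Variables (R : realType) (V : finType) (e : rel V) (rho : R) (whi sdd : V -> V -> R).
Hypothesis irr : irreflexive e.
Hypothesis whis : forall a b, whi a b = whi b a.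
Hypothesis sdds : forall a b, sdd a b = sdd b a.
Hypothesis sddle : forall a b, e a b -> sdd a b <= whi a b.

Definition tlf (l : seq (V * V)) (a b : V) : R :=
  if ((a, b) \in l) || ((b, a) \in l) then whi a b else sdd a b.

Lemma tlf_ge l a b : e a b -> sdd a b <= tlf l a b.
Proof. by move=> eab; rewrite /tlf; case: ifP => _ //; apply: sddle. Qed.

Lemma tlf_step a b l c d : e c d ->
  tlf ((a, b) :: l) c d <= tlf l c d +
    (if ((c == a) && (d == b)) || ((c == b) && (d == a)) then whi a b - sdd a b else 0).
Proof.
move=> ecd; have [hm|hm] := boolP (((c == a) && (d == b)) || ((c == b) && (d == a))).
  have [wE sE] : whi c d = whi a b /\ sdd c d = sdd a b.
    by move: hm => /orP[] /andP[/eqP-> /eqP->]; rewrite // whis sdds.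
  have h1 : tlf ((a, b) :: l) c d = whi c d.
    move: hm => /orP[] /andP[/eqP-> /eqP->]; by rewrite /tlf !inE ?eqxx /= ?orbT.
  rewrite h1 wE; have := tlf_ge l ecd; rewrite sE => h; lra.
have h1 : tlf ((a, b) :: l) c d = tlf l c d.
  rewrite /tlf !inE !xpair_eqE; move: hm; rewrite negb_or => /andP[/negbTE -> h2].
  by rewrite /= [(d == a) && _]andbC (negbTE h2).
by rewrite h1 addr0.
Qed.

Lemma tl_chain (l : seq (V * V)) u : (forall ab, ab \in l -> e ab.1 ab.2) ->
  btime e rho (tlf l) u setT <= btime e rho sdd u setT + \sum_(ab <- l) (whi ab.1 ab.2 - sdd ab.1 ab.2).
Proof.
elim: l => [|[a b] l IH] hl.
  rewrite big_nil addr0 /btime; apply: bfuel_mono => //.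
have eab : e a b by apply: (hl (a, b)); rewrite mem_head.
have IH' : btime e rho (tlf l) u setT <= btime e rho sdd u setT + \sum_(ab <- l) (whi ab.1 ab.2 - sdd ab.1 ab.2).
  by apply: IH => ab h; apply: hl; rewrite inE h orbT.
have st : btime e rho (tlf ((a, b) :: l)) u setT <= btime e rho (tlf l) u setT + (whi a b - sdd a b).
  rewrite /btime; apply: (@bfuel_lip _ _ _ rho irr _ _ _ u setT a b) => //.
    by rewrite subr_ge0; apply: sddle.
  by move=> c d _ _ ecd; apply: tlf_step.
rewrite big_cons /=; lra.
Qed.

End Chain2.

Unset Implicit Arguments.

Theorem fact1 (R : realType) (V : finType) (e : rel V)
  (wlo whi : V -> V -> R) (rho : R) (x y : V) (sdd : V -> V -> R) :
  is_tree e ->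
  (forall a b, wlo a b = wlo b a) -> (forall a b, whi a b = whi b a) ->
  (forall a b, e a b -> 0 <= wlo a b <= whi a b) ->
  0 < rho ->
  y != x ->
  worst_case e rho wlo whi x sdd ->
  prime_center e rho sdd y ->
  let s := fun a b =>
    pif (on_path e x y a b \/ (a \in Tc e y x /\ b \in Tc e y x))
        (alpha e wlo whi x y a b) (sdd a b) in
  worst_case e rho wlo whi x s /\ y \in Bcenters e rho s.
Proof.
move=> tree wlos whis hlh rho0 yx [[sdds sddi] [y' hy']] [ycent hprime] s.
have irr := t_irr tree.
have sym := t_sym tree.
have sdd0 : forall a b, e a b -> 0 <= sdd a b.
  by move=> a b eab; have := hlh a b eab; have := sddi a b eab; case/andP => h1 _ /andP[h2 _]; apply: le_trans h2 h1.
have sddle : forall a b, e a b -> sdd a b <= whi a b by move=> a b /sddi /andP[].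
have [p [pp lp up]] := cpath (t_conn tree x y).
case: p pp lp up => [|v q'] pp lp up; first by move: yx; rewrite -lp /= eqxx.
have lp' : last v q' = y by [].
set u0 := last x (belast v q').
have eu0y : e u0 y by rewrite -lp'; apply: last_edge pp.
have u0A : u0 \in Tc e y x.
  have := @prefA _ e x (v :: q') u0 pp up; rewrite [last x _]/= lp'; apply.
    have := mem_last x (belast v q'); rewrite -/u0 inE => /orP[/eqP->|h]; first exact: mem_head.
    by rewrite inE (mem_belast h) orbT.
  by apply/eqP => h; rewrite h irr in eu0y.
have TA : Tc e y u0 = Tc e y x := Tc_same tree u0A.
have TB : ~: Tc e y x = Tc e u0 y by rewrite -TA TF3 // sym.
have hab : btime e rho sdd u0 (Tc e y u0) <= btime e rho sdd y (Tc e u0 y).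
  have := hprime u0 (_ : e y u0); rewrite sym => /(_ eu0y).
  by rewrite /Tbar TF3 // TF3 // sym.
have [_ UB] : btime e rho sdd x (Tc e v x) <= btime e rho sdd u0 (Tc e y u0) /\
    btime e rho sdd x setT <= pcost rho sdd [:: x, v & q'] + btime e rho sdd y (Tc e u0 y).
  by have := @UC _ _ e rho tree rho0 sdd q' sdd0 x v setT (good_setT e x) (in_setT v) pp up; rewrite -/u0 lp'; apply.
have LB : pcost rho s [:: x, v & q'] + btime e rho s y (Tc e u0 y) <= btime e rho s x setT.
  by have := @LC _ _ e rho tree rho0 s q' x v setT (good_setT e x) (in_setT v) pp up; rewrite -/u0 lp'.
have hB : forall a b, a \in Tc e u0 y -> b \in Tc e u0 y -> e a b -> s a b = sdd a b.
  move=> a b aB bB eab; rewrite /s pifF //; case.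
  - case=> qq [pq lq uq hinf].
    have memq : a \in x :: qq /\ b \in x :: qq.
      by move/orP: hinf => [] /mem_infix h; split; apply: h; rewrite !inE eqxx ?orbT.
    have [c [cB cq cy]] : exists c, [/\ c \in Tc e u0 y, c \in x :: qq & c != y].
      case: (eqVneq a y) => [ay|ay]; last by exists a; case: memq.
      exists b; split => //; first by case: memq.
      by apply/eqP => by'; rewrite by' ay irr in eab.
    have := prefA pq uq cq; rewrite lq => /(_ cy) cA.
    by move: cB; rewrite -TB inE cA.
  - by case=> aA _; move: aB; rewrite -TB inE aA.
have beta : btime e rho s y (Tc e u0 y) = btime e rho sdd y (Tc e u0 y).
  have yB : y \in Tc e u0 y by apply: zD.
  apply/le_anti/andP; split; rewrite /btime; apply: (bfuel_mono rho irr) => // a b aB bB eab;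
    by rewrite hB.
set L := zip [:: x, v & q'] (v :: q').
have onp : forall a b, on_path e x y a b -> ((a, b) \in L) || ((b, a) \in L).
  move=> a b [qq [pq lq uq hinf]].
  have eq : qq = v :: q' := t_uniq tree pq lq uq pp lp up.
  by rewrite /L !zip_infix -eq.
have Ledge : forall ab, ab \in L -> e ab.1 ab.2.
  by case=> a b hab'; apply: path_zip_edge pp hab'.
have s_le : forall a b, e a b -> s a b <= tlf whi sdd L a b.
  move=> a b eab; rewrite /s.
  case: (excluded_middle_informative (on_path e x y a b)) => [hop | hnop].
    rewrite pifT; last by left.
    by rewrite /alpha pifT; [rewrite /tlf onp | left].
  case: (excluded_middle_informative (a \in Tc e y x /\ b \in Tc e y x)) => [[aA bA] | hn].
    rewrite pifT; last by right.
    rewrite /alpha pifF; last by case => // [[h _]]; move: h; rewrite /Tbar inE aA.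
    apply: (le_trans _ (tlf_ge sddle L eab)); by move: (sddi a b eab) => /andP[].
  rewrite pifF; first exact: (tlf_ge sddle L eab).
  by move=> [h|h]; [apply: hnop | apply: hn].
have CH := @tl_chain _ _ e rho whi sdd irr whis sdds sddle L y Ledge.
have bys : btime e rho s y setT <= btime e rho (tlf whi sdd L) y setT.
  by rewrite /btime; apply: (bfuel_mono rho irr) => // a b _ _ eab; apply: s_le.
have PS : pcost rho s [:: x, v & q'] = \sum_(ab <- L) (rho + whi ab.1 ab.2).
  rewrite /pcost; apply: eq_big_seq => -[a b] hab'; congr (_ + _).
  have hop : on_path e x y a b.
    by exists (v :: q'); split => //; move: hab'; rewrite zip_infix => ->.
  rewrite /s pifT; last by left.
  by rewrite /alpha pifT //; left.
have PD : pcost rho sdd [:: x, v & q'] = \sum_(ab <- L) (rho + sdd ab.1 ab.2) by [].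
have SUM : \sum_(ab <- L) (rho + whi ab.1 ab.2) =
    \sum_(ab <- L) (rho + sdd ab.1 ab.2) + \sum_(ab <- L) (whi ab.1 ab.2 - sdd ab.1 ab.2).
  by rewrite -big_split /=; apply: eq_bigr => ab _; lra.
have key : regret e rho sdd x y <= regret e rho s x y.
  rewrite /regret; lra.
have ymin : btime e rho sdd y setT <= btime e rho sdd y' setT.
  by move: ycent; rewrite inE => /forallP /(_ y').
have is_s : is_scenario e wlo whi s.
  split.
    move=> a b; rewrite /s /alpha (whis a b) (wlos a b) (sdds a b).
    have c1 : (on_path e x y a b \/ (a \in Tc e y x /\ b \in Tc e y x)) <->
              (on_path e x y b a \/ (b \in Tc e y x /\ a \in Tc e y x)).
      by rewrite on_path_sym; split; case=> [h|[h1 h2]]; [left|right|left|right].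
    have c2 : (on_path e x y a b \/ (a \in Tbar e y x /\ b \in Tbar e y x)) <->
              (on_path e x y b a \/ (b \in Tbar e y x /\ a \in Tbar e y x)).
      by rewrite on_path_sym; split; case=> [h|[h1 h2]]; [left|right|left|right].
    by rewrite (pif_ext _ _ c1) (pif_ext _ _ c2).
  move=> a b eab; rewrite /s; apply: (@pif_cases _ _ _ _ (fun r => wlo a b <= r <= whi a b)).
    rewrite /alpha; apply: (@pif_cases _ _ _ _ (fun r => wlo a b <= r <= whi a b)).
      by move: (hlh a b eab) => /andP[_ ->]; rewrite lexx.
    by move: (hlh a b eab) => /andP[_ ->]; rewrite lexx.
  exact: sddi.
split.
  split => //; exists y => y2 s2 hs2; apply: le_trans (hy' y2 s2 hs2) _.
  by move: key; rewrite /regret => key; lra.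
rewrite inE; apply/forallP => v2; have := hy' v2 s is_s; move: key; rewrite /regret => key h; lra.
Qed.
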